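(* $$c_{2r}(1,\beta,0)=\frac{1}{2^{2r}(2r)!}\prod_{i=1}^r\big(1-(2i-1)^2\beta\big).$$
   Context: Fix an integer $r\ge1$ and indeterminates $\alpha,\beta,\gamma$. Define polynomials $c_n=c_n(\alpha,\beta,\gamma)\in\mathbb{Q}[\alpha,\beta,\gamma]$ by $c_n=0$ for $n<0$, $c_0=1$, and for every integer $n\ge-3$, $$(n+4)c_{n+4}+(2n+6-r)\alpha c_{n+3}+\left[(n+2-r)\alpha^2+(2n+5-2r)\frac{\alpha^2-\beta}{4}\right]c_{n+2}+\left[(2n+3-3r)\alpha\frac{\alpha^2-\beta}{4}+\frac{\gamma}{2}\right]c_{n+1}+\frac{1}{16}(\alpha^2-\beta)^2(n+1-2r)c_n=0.$$ $c_{2r}(1,\beta,0)\in\mathbb{Q}[\beta]$ denotes $c_{2r}$ with $\alpha=1$, $\gamma=0$. *)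

(* Defs.v *)
From HB Require Import structures.
From mathcomp Require Import all_boot all_order all_algebra.
Set Implicit Arguments. Unset Strict Implicit. Unset Printing Implicit Defensive.
Import Order.TTheory GRing.Theory Num.Theory.
Local Open Scope ring_scope.

(* Taking
   R = Q[alpha,beta,gamma] with the indeterminates gives the paper's c_n;
   specializing (alpha,beta,gamma) to (1, 'X, 0) in R = {poly rat} gives
   c_n(1,beta,0) in Q[beta] (the recurrence is preserved by the Q-algebra
   morphism Q[alpha,beta,gamma] -> Q[beta]).

   c_state m = (c_m, c_{m-1}, c_{m-2}, c_{m-3}) (zeros for negative indices). *)
Section CSeq.
Variables (R : comAlgType rat) (r : nat) (a b g : R).

Definition zR (z : int) : R := z%:~R.

Definition c_next (m : nat) (x1 x2 x3 x4 : R) : R :=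
  - ((m%:R : rat)^-1) *:
    (  zR (2 * m%:Z - 2 - r%:Z) * a * x1
     + (zR (m%:Z - 2 - r%:Z) * a ^+ 2
        + ((1 / 4 : rat) *: (zR (2 * m%:Z - 3 - 2 * r%:Z) * (a ^+ 2 - b)))) * x2
     + ((1 / 4 : rat) *: (zR (2 * m%:Z - 5 - 3 * r%:Z) * a * (a ^+ 2 - b))
        + (1 / 2 : rat) *: g) * x3
     + (1 / 16 : rat) *: ((a ^+ 2 - b) ^+ 2 * zR (m%:Z - 3 - 2 * r%:Z)) * x4).

Fixpoint c_state (m : nat) : R * R * R * R :=
  match m with
  | 0%N => (1, 0, 0, 0)
  | m'.+1 =>
      let '(x1, x2, x3, x4) := c_state m' in
      (c_next m'.+1 x1 x2 x3 x4, x1, x2, x3)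
  end.

Definition cseq (m : nat) : R := (c_state m).1.1.1.
End CSeq.

(* Main.v *)
Require Import Defs.
From HB Require Import structures.
From mathcomp Require Import all_boot all_order all_algebra.
From mathcomp Require Import ring zify.
Import Order.TTheory GRing.Theory Num.Theory.
Local Open Scope ring_scope.

Notation P := {poly rat}.
Definition c r n : P := cseq r 1 'X 0 n.
Definition CI r (i : int) : P := match i with Posz n => c r n | Negz _ => 0 end.
Definition dd : P := (1/4 : rat) *: (1 - 'X).

Definition Tail (r : nat) (i : int) (x1 x2 x3 x4 : P) : P :=
  (2*i - 2 - r%:Z)%:~R * x1 + ((i-2-r%:Z)%:~R + (2*i-3-2*r%:Z)%:~R * dd) * x2
  + (2*i-5-3*r%:Z)%:~R * dd * x3 + (i-3-2*r%:Z)%:~R * dd^+2 * x4.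

Definition Ofun r (s : int -> P) (i : int) : P :=
  i%:~R * s i + Tail r i (s (i-1)) (s (i-2)) (s (i-3)) (s (i-4)).

Definition Efun r (s : int -> P) (i : int) : P :=
  i%:~R * s i + (i-1-r%:Z)%:~R * s (i-1) + dd * (i-1-2*r%:Z)%:~R * s (i-2).

Lemma dd2 : dd ^+ 2 = (1/16 : rat) *: (1 - 'X) ^+ 2.
Proof. by rewrite /dd exprZn (_ : (1/4 : rat)^+2 = 1/16) //; apply/eqP. Qed.

Lemma dd4 : 4 * dd = 1 - 'X.
Proof.
rewrite /dd -scalerAr (_ : (4 : P) = (4:rat) *: 1); last by rewrite scaler_nat.
rewrite -scalerAl scalerA mul1r mulVf ?mul1r ?scale1r //.
Qed.

Lemma next_eq r (m : nat) x1 x2 x3 x4 : m != 0%N ->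
  (m%:R : P) * c_next r 1 'X 0 m x1 x2 x3 x4 = - Tail r m x1 x2 x3 x4.
Proof.
move=> m0.
have -> : c_next r 1 'X 0 m x1 x2 x3 x4 = - ((m%:R : rat)^-1) *: Tail r m x1 x2 x3 x4.
  rewrite /c_next /Tail /zR; congr (_ *: _).
  rewrite expr1n !mulr1 scaler0 addr0 !scalerAr -/dd dd2 -!scalerAr.
  by rewrite [(1 - 'X) ^+ 2 * _]mulrC.
rewrite scaleNr mulrN; congr (- _).
rewrite -scalerAr mulr_natl -scaler_nat scalerA mulVf ?scale1r //.
by rewrite pnatr_eq0.
Qed.

Lemma CI_lt0 r (i : int) : i < 0 -> CI r i = 0.
Proof. by case: i. Qed.

Lemma c_state_eq r (m : nat) :
  c_state r 1 'X 0 m = (CI r m, CI r (Posz m - 1), CI r (Posz m - 2), CI r (Posz m - 3)).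
Proof.
elim: m => [|m IH].
  by [].
have e1 : Posz m.+1 - 1 = Posz m by lia.
have e2 : Posz m.+1 - 2 = Posz m - 1 by lia.
have e3 : Posz m.+1 - 3 = Posz m - 2 by lia.
rewrite e1 e2 e3 /= IH /=; congr (_, _, _, _).
by rewrite /CI /c /cseq /= IH.
Qed.

Lemma c_rec r (m : nat) :
  c r m.+1 = c_next r 1 'X 0 m.+1 (CI r (Posz m.+1 - 1)) (CI r (Posz m.+1 - 2))
     (CI r (Posz m.+1 - 3)) (CI r (Posz m.+1 - 4)).
Proof.
have e1 : Posz m.+1 - 1 = Posz m by lia.
have e2 : Posz m.+1 - 2 = Posz m - 1 by lia.
have e3 : Posz m.+1 - 3 = Posz m - 2 by lia.
have e4 : Posz m.+1 - 4 = Posz m - 3 by lia.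
by rewrite e1 e2 e3 e4 /c /cseq /= c_state_eq.
Qed.

Lemma Ofun_next r (s : int -> P) (m : nat) :
  (Ofun r s (Posz m.+1) == 0) =
  (s (Posz m.+1) == c_next r 1 'X 0 m.+1 (s (Posz m.+1 - 1)) (s (Posz m.+1 - 2))
     (s (Posz m.+1 - 3)) (s (Posz m.+1 - 4))).
Proof.
have H : (m.+1%:R : P) != 0 by rewrite -polyC_natr polyC_eq0 pnatr_eq0.
rewrite -[RHS](inj_eq (mulfI H)) next_eq // /Ofun addr_eq0.
by [].
Qed.

Lemma Oc r i : Ofun r (CI r) i = 0.
Proof.
case: i => [[|m]|n].
- by rewrite /Ofun /Tail ![CI r (_ - _)]CI_lt0 // mul0r !mulr0 !addr0.
- by apply/eqP; rewrite Ofun_next -c_rec.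
- rewrite /Ofun /Tail !CI_lt0 ?mulr0 ?addr0 //; lia.
Qed.

Lemma OE r s i : Ofun r s i = Efun r s i + Efun r s (i-1) + dd * Efun r s (i-2).
Proof.
have e1 : i - 1 - 1 = i - 2 by ring.
have e2 : i - 1 - 2 = i - 3 by ring.
have e3 : i - 2 - 1 = i - 3 by ring.
have e4 : i - 2 - 2 = i - 4 by ring.
rewrite /Ofun /Tail /Efun e1 e2 e3 e4; ring.
Qed.

Lemma E_zero_le r (n : nat) (i : int) : i <= Posz n -> Efun r (CI r) i = 0.
Proof.
elim: n i => [|n IH] i hi.
  have h1 : CI r (i - 1) = 0 by apply: CI_lt0; lia.
  have h2 : CI r (i - 2) = 0 by apply: CI_lt0; lia.
  rewrite /Efun h1 h2 !mulr0 !addr0.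
  have [->|hneg] := eqVneq i 0; first by rewrite mul0r.
  by rewrite CI_lt0 ?mulr0 //; lia.
have [hle|hgt] := boolP (i <= Posz n); first exact: IH.
have ei : i = Posz n.+1 by lia.
have := Oc r i; rewrite OE (IH (i-1)) ?(IH (i-2)); [|lia|lia].
by rewrite mulr0 !addr0.
Qed.

Lemma E_zero r i : Efun r (CI r) i = 0.
Proof.
case: i => [n|n]; first exact: (E_zero_le r n).
by apply: (E_zero_le r 0).
Qed.

Lemma uniq_c r (s : int -> P) : (forall i, i < 0 -> s i = 0) -> s 0 = 1 ->
  (forall i, Ofun r s i = 0) -> forall i, s i = CI r i.
Proof.
move=> sneg s0 sO.
suff H : forall n : nat, forall i : int, i <= Posz n -> s i = CI r i.
  by move=> i; case: i => [n|n]; apply: (H n); lia.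
elim=> [|n IH] i hi.
  have [->|hneg] := eqVneq i 0; first by rewrite s0.
  by rewrite sneg ?CI_lt0 //; lia.
have [hle|hgt] := boolP (i <= Posz n); first exact: IH.
have -> : i = Posz n.+1 by lia.
have := eqxx (0 : P); rewrite -{1}(sO (Posz n.+1)) Ofun_next => /eqP ->.
rewrite /CI c_rec !IH //; lia.
Qed.

Lemma shiftQ r i : CI r.+1 i = CI r i + CI r (i-1) + dd * CI r (i-2).
Proof.
set s := fun i => CI r i + CI r (i-1) + dd * CI r (i-2).
rewrite -/(s i); symmetry; apply: uniq_c => {i} [i hi||i].
- by rewrite /s !CI_lt0 ?mulr0 ?addr0 //; lia.
- by rewrite /s ![CI r (_ - _)]CI_lt0 // mulr0 !addr0.
have Es : forall j, Efun r.+1 s j = Ofun r (CI r) j.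
  move=> j.
  have e1 : j - 1 - 1 = j - 2 by ring.
  have e2 : j - 1 - 2 = j - 3 by ring.
  have e3 : j - 2 - 1 = j - 3 by ring.
  have e4 : j - 2 - 2 = j - 4 by ring.
  rewrite /Efun /s /Ofun /Tail e1 e2 e3 e4 intS; ring.
by rewrite OE !Es !Oc mulr0 !addr0.
Qed.

Lemma step k :
  ((4 * (2 * k + 1) * (2 * k + 2))%:R : P) * c k.+1 (2 * k.+1) =
  (1 - ((2 * k + 1) ^ 2)%:R *: 'X) * c k (2 * k).
Proof.
have -> : c k.+1 (2 * k.+1) = CI k.+1 (2 * k%:Z + 2).
  by rewrite (_ : 2 * k%:Z + 2 = Posz (2 * k.+1)) //; lia.
have -> : c k (2 * k) = CI k (2 * k%:Z) by rewrite (_ : 2 * k%:Z = Posz (2 * k)) //; lia.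
have EB := E_zero k (2 * k%:Z + 2).
have EC := E_zero k (2 * k%:Z + 1).
move: EB EC; rewrite shiftQ /Efun.
have e1 : 2 * k%:Z + 2 - 1 = 2 * k%:Z + 1 by ring.
have e2 : 2 * k%:Z + 2 - 2 = 2 * k%:Z by ring.
have e3 : 2 * k%:Z + 1 - 1 = 2 * k%:Z by ring.
have e4 : 2 * k%:Z + 1 - 2 = 2 * k%:Z - 1 by ring.
rewrite e1 e2 e3 e4 => EB EC.
set A := CI k (2 * k%:Z); set B := CI k (2 * k%:Z + 1); set C := CI k (2 * k%:Z + 2).
set D := CI k (2 * k%:Z - 1).
apply/eqP; rewrite -subr_eq0 [_ *: 'X]scaler_nat.
have -> : ((4 * (2 * k + 1) * (2 * k + 2))%:R : P) * (C + B + dd * A) -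
    (1 - 'X *+ (2 * k + 1) ^ 2) * A =
  4 * (2 * k + 1)%:R * ((2 * k%:Z + 2)%:~R * C + (2 * k%:Z + 1 - k%:Z)%:~R * B +
                  dd * (2 * k%:Z + 1 - 2 * k%:Z)%:~R * A)
  + 4 * (k + 1)%:R * ((2 * k%:Z + 1)%:~R * B + (2 * k%:Z - k%:Z)%:~R * A +
                  dd * (2 * k%:Z - 2 * k%:Z)%:~R * D)
  + ((2 * k + 1) ^ 2)%:R * (4 * dd - (1 - 'X)) * A by ring.
by rewrite EB EC dd4 subrr !mulr0 mul0r !addr0.
Qed.

Lemma prodform r :
  ((2 ^ (2 * r) * (2 * r)`!)%:R : rat) *: c r (2 * r) =
    \prod_(1 <= i < r.+1) (1 - ((2 * i - 1) ^ 2)%:R *: 'X : P).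
Proof.
elim: r => [|k IH].
  by rewrite big_geq // scale1r.
have eq : (2 ^ (2 * k.+1) * (2 * k.+1)`! =
   2 ^ (2 * k) * (2 * k)`! * (4 * (2 * k + 1) * (2 * k + 2)))%N.
  rewrite (_ : (2 * k.+1 = (2 * k).+2)%N); last by lia.
  rewrite !factS !expnS; ring.
have H : ((4 * (2 * k + 1) * (2 * k + 2))%:R : rat) *: c k.+1 (2 * k.+1) =
   (1 - ((2 * k + 1) ^ 2)%:R *: 'X) * c k (2 * k).
  by rewrite scaler_nat -[c _ _ *+ _]mulr_natl step.
rewrite eq natrM -scalerA H scalerAr IH.
rewrite [in RHS]big_nat_recr //= mulrC; congr (_ * _).
by rewrite (_ : (2 * k.+1 - 1 = 2 * k + 1)%N) //; lia.
Qed.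

Theorem lemma4p4 (r : nat) (hr : (1 <= r)%N) :
  cseq r 1 'X 0 (2 * r) =
  ((2 ^ (2 * r) * (2 * r)`!)%:R : rat)^-1 *:
    \prod_(1 <= i < r.+1) (1 - ((2 * i - 1) ^ 2)%:R *: 'X : {poly rat}).
Proof.
rewrite -prodform scalerA mulVf ?scale1r //.
by rewrite pnatr_eq0 muln_eq0 negb_or expn_eq0 -!lt0n fact_gt0.
Qed.
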